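(* Let $f\in\mathcal F^{\,r}_{op}$ and $k\ge1$. The following are equivalent: (i) $I^{SLD}_\rho(A)\le k\,I^f_\rho(A)$ for every $n$, every faithful $\rho\in\mathcal D^1_n$ and every self-adjoint $A\in M_n(\mathbb C)$; (ii) $m_{\tilde f}(x,y)\le\big(1-\frac1k\big)\frac{x+y}{2}+\frac1k\cdot\frac{2xy}{x+y}$ for all $x,y>0$; (iii) $f(x)\le 2kf(0)\cdot\frac{1+x}{2}$ for all $x>0$.
   Context: $\mathcal F_{op}$ is the class of functions $f:(0,\infty)\to(0,\infty)$ that are operator monotone, satisfy $f(1)=1$ and $tf(t^{-1})=f(t)$ for all $t>0$. $f(0):=\lim_{x\to0^+}f(x)$, and $\mathcal F^{\,r}_{op}=\{f\in\mathcal F_{op}: f(0)\neq0\}$. For $f\in\mathcal F^{\,r}_{op}$ and $x>0$, $\tilde f(x):=\frac12\big[(x+1)-(x-1)^2\frac{f(0)}{f(x)}\big]$ (this $\tilde f$ again belongs to $\mathcal F_{op}$). For any $g\in\mathcal F_{op}$ and $x,y>0$, $m_g(x,y)=xg(y/x)$. $\mathcal D_n^1$ is the set of strictly positive $n\times n$ density matrices. $L_\rho(X)=\rho X$, $R_\rho(X)=X\rho$, and $m_f(L_\rho,R_\rho)$ multiplies the entry $X_{ij}$ of $X$ (in an orthonormal eigenbasis of $\rho$ with eigenvalues $\lambda_i$) by $m_f(\lambda_i,\lambda_j)$. $\|X\|^2_{\rho,f}=\mathrm{Tr}\big(X^* m_f(L_\rho,R_\rho)^{-1}(X)\big)$. The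 $f$-information is $I^f_\rho(A)=\frac{f(0)}{2}\|i[\rho,A]\|^2_{\rho,f}$, and $I^{SLD}_\rho:=I^{f_{SLD}}_\rho$ with $f_{SLD}(x)=\frac{1+x}{2}$ (equivalently $\frac14\mathrm{Tr}(\rho L^2)$, $L=2(L_\rho+R_\rho)^{-1}(i[\rho,A])$). *)

(* Defs.v *)
From mathcomp Require Import all_boot all_algebra.
From mathcomp Require Import boolp classical_sets reals topology normedtype.
From mathcomp.real_closed Require Import complex.

Set Implicit Arguments.
Unset Strict Implicit.
Unset Printing Implicit Defensive.

Import GRing.Theory Num.Theory numFieldNormedType.Exports.
Local Open Scope ring_scope.
Local Open Scope classical_set_scope.

Section QuantumInfo.
Variable R : realType.
Local Notation C := R[i].

Definition adj {m n} (M : 'M[C]_(m, n)) : 'M[C]_(n, m) := (M ^t* )%sesqui.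

(* Loewner order: A <= B iff B - A is positive semidefinite,
   i.e. v (B - A) v^* >= 0 for all vectors v (over C this forces B - A
   to be self-adjoint). *)
Definition loewner_le {n} (A B : 'M[C]_n) : Prop :=
  forall v : 'rV[C]_n, 0 <= (v *m (B - A) *m adj v) 0 0.

Definition herm_of {n} (U : 'M[C]_n) (d : 'rV[R]_n) : 'M[C]_n :=
  U *m diag_mx (map_mx (fun x : R => x%:C%C) d) *m adj U.

(* Operator monotone on (0,oo): for every n and positive definite matrices
   A <= B one has f(A) <= f(B), where f(A) is defined by the functional
   calculus through any spectral decomposition A = U diag(d) U^*. *)
Definition operator_monotone (f : R -> R) : Prop :=
  forall (n : nat) (U V : 'M[C]_n) (d e : 'rV[R]_n),
    U \is unitarymx -> V \is unitarymx ->
    (forall i, 0 < d 0 i) -> (forall i, 0 < e 0 i) ->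
    loewner_le (herm_of U d) (herm_of V e) ->
    loewner_le (herm_of U (map_mx f d)) (herm_of V (map_mx f e)).

Definition f0 (f : R -> R) : R := lim (f x @[x --> 0^'+]).

Definition Fop (f : R -> R) : Prop :=
  [/\ operator_monotone f,
      (forall x, 0 < x -> 0 < f x),
      f 1 = 1 &
      (forall x, 0 < x -> x * f x^-1 = f x)].

Definition Fop_r (f : R -> R) : Prop := Fop f /\ f0 f != 0.

Definition ftilde (f : R -> R) (x : R) : R :=
  ((x + 1) - (x - 1) ^+ 2 * (f0 f / f x)) / 2.

Definition mean_of (g : R -> R) (x y : R) : R := x * g (y / x).

Definition f_SLD (x : R) : R := (1 + x) / 2.

Definition selfadj {n} (A : 'M[C]_n) : Prop := A = adj A.

Definition faithful_density {n} (rho : 'M[C]_n) : Prop :=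
  [/\ selfadj rho,
      (forall v : 'rV[C]_n, v != 0 -> 0 < (v *m rho *m adj v) 0 0) &
      \tr rho = 1].

(* m_g(L_rho, R_rho)^{-1}(X), computed in the orthonormal eigenbasis of rho
   given by the columns of U, where rho = U diag(lam) U^*. *)
Definition mLR_inv (g : R -> R) {n} (U : 'M[C]_n) (lam : 'rV[R]_n)
    (X : 'M[C]_n) : 'M[C]_n :=
  U *m (\matrix_(i, j) ((adj U *m X *m U) i j
                         / (mean_of g (lam 0 i) (lam 0 j))%:C%C)) *m adj U.

Definition norm2 (g : R -> R) {n} (U : 'M[C]_n) (lam : 'rV[R]_n)
    (X : 'M[C]_n) : R :=
  complex.Re (\tr (adj X *m mLR_inv g U lam X)).

Definition info (g : R -> R) {n} (U : 'M[C]_n) (lam : 'rV[R]_n)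
    (A : 'M[C]_n) : R :=
  let rho := herm_of U lam in
  f0 g / 2 * norm2 g U lam ('i%C *: (rho *m A - A *m rho)).

End QuantumInfo.

(* Main.v *)
Require Import Defs.
Set Warnings "-all".
From mathcomp Require Import all_boot all_algebra.
From mathcomp Require Import boolp classical_sets reals topology normedtype.
From mathcomp.real_closed Require Import complex.
From mathcomp Require Import order spectral ring lra.
Import Order.TTheory GRing.Theory Num.Theory numFieldNormedType.Exports.
Local Open Scope ring_scope.

Lemma Re_key (R : realType) (x y m : R) (b : R[i]) :
  complex.Re ((('i%C * (x%:C%C * b - b * y%:C%C)))^* * (('i%C * (x%:C%C * b - b * y%:C%C)) / m%:C%C))
  = (x - y) ^+ 2 * complex.Re (b^* * b) / m.
Proof.
case: b => a c /=.
have [->|m0] := eqVneq m 0.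
  by rewrite !(mul0r, invr0, mulr0, oppr0, subr0, addr0).
by field.
Qed.

Lemma adjM (R : realType) m n p (A : 'M[R[i]]_(m, n)) (B : 'M[R[i]]_(n, p)) :
  adj (A *m B) = adj B *m adj A.
Proof. by rewrite /adj trmx_mul map_mxM. Qed.

Lemma adjK (R : realType) m n (A : 'M[R[i]]_(m, n)) : adj (adj A) = A.
Proof. exact: trmxCK. Qed.

Lemma adjUU (R : realType) n (U : 'M[R[i]]_n) : U \is unitarymx -> adj U *m U = 1%:M.
Proof. by move=> uU; rewrite -[adj U]mul1mx /adj mulmxKtV. Qed.

Lemma UadjU (R : realType) n (U : 'M[R[i]]_n) : U \is unitarymx -> U *m adj U = 1%:M.
Proof. by move/unitarymxP. Qed.

Lemma info_sum (R : realType) (g : R -> R) n (U A : 'M[R[i]]_n) (lam : 'rV[R]_n) :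
  U \is unitarymx ->
  info g U lam A = f0 g / 2 * \sum_i \sum_j
     ((lam 0 j - lam 0 i) ^+ 2 * complex.Re (((adj U *m A *m U) j i)^* * (adj U *m A *m U) j i)
        / mean_of g (lam 0 j) (lam 0 i)).
Proof.
move=> uU; rewrite /info /norm2 /herm_of; congr (_ * _).
set D := diag_mx _.
set B := adj U *m A *m U.
set X := 'i%C *: _.
set Y := adj U *m X *m U.
have hY : Y = 'i%C *: (D *m B - B *m D).
  rewrite /Y /X -scalemxAr -scalemxAl.
  congr (_ *: _).
  rewrite mulmxBr mulmxBl /B; congr (_ - _).
    by rewrite !mulmxA adjUU // mul1mx.
  by rewrite !mulmxA -(mulmxA _ (adj U) U) adjUU // mulmx1.
rewrite /mLR_inv -/Y.
set M := \matrix_(i, j) _.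
have -> : \tr (adj X *m (U *m M *m adj U)) = \tr (adj Y *m M).
  rewrite mulmxA mxtrace_mulC /Y !adjM adjK !mulmxA //.
rewrite /M /adj hY mul_diag_mx mul_mx_diag; clearbody B.
rewrite /mxtrace raddf_sum; apply: eq_bigr => i _.
rewrite mxE raddf_sum; apply: eq_bigr => j _.
rewrite !mxE.
exact: Re_key.
Qed.

Lemma lam_pos (R : realType) n (rho U : 'M[R[i]]_n) (lam : 'rV[R]_n) :
  faithful_density rho -> U \is unitarymx -> rho = herm_of U lam ->
  forall i, 0 < lam 0 i.
Proof.
move=> [_ hpos _] uU hrho i; subst rho.
set e : 'rV[R[i]]_n := delta_mx 0 i.
have : (e *m adj U) != 0.
  apply/negP => /eqP h.
  have : e *m adj U *m U = 0 by rewrite h mul0mx.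
  rewrite -mulmxA adjUU // mulmx1 => /matrixP /(_ 0 i).
  by rewrite !mxE !eqxx /= => /eqP; rewrite oner_eq0.
move/hpos.
rewrite /herm_of adjM adjK !mulmxA -(mulmxA e (adj U) U) adjUU // mulmx1.
rewrite -(mulmxA _ (adj U) U) adjUU // mulmx1.
rewrite /e -rowE row_diag_mx -scalemxAl /adj trmx_delta map_delta_mx mul_delta_mx.
by rewrite !mxE !eqxx /= mulr1 ltcR.
Qed.
Lemma adj1 (R : realType) n : adj (1%:M : 'M[R[i]]_n) = 1%:M.
Proof. by rewrite /adj trmx1 map_mx1. Qed.

Lemma unitary1 (R : realType) n : (1%:M : 'M[R[i]]_n) \is unitarymx.
Proof. by apply/unitarymxP; rewrite -/(adj _) adj1 mulmx1. Qed.

Lemma mx11 (R : realType) (v M : 'M[R[i]]_1) :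
  (v *m M *m adj v) 0 0 = v 0 0 * M 0 0 * (v 0 0)^*.
Proof. by rewrite !(mxE, big_ord1). Qed.

Lemma c0 (R : realType) (r : R) : (0 <= r%:C%C) = (0 <= r).
Proof. by rewrite lecE /= eqxx. Qed.

Lemma c0' (R : realType) (r : R) : (0 < r%:C%C) = (0 < r).
Proof. by rewrite ltcE /= eqxx. Qed.

Lemma fmono (R : realType) (f : R -> R) : operator_monotone f ->
  forall a b, 0 < a -> a <= b -> f a <= f b.
Proof.
move=> hm a b a0 ab.
have u1 : (1%:M : 'M[R[i]]_1) \is unitarymx by apply/unitarymxP; rewrite -/(adj _) adj1 mulmx1.
have := hm 1%N 1%:M 1%:M (const_mx a) (const_mx b) u1 u1.
rewrite /loewner_le /herm_of !mul1mx !adj1 !mulmx1.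
move=> h.
have h1 : forall i, 0 < (const_mx a : 'rV[R]_1) 0 i by move=> i; rewrite mxE.
have h2 : forall i, 0 < (const_mx b : 'rV[R]_1) 0 i by move=> i; rewrite mxE (lt_le_trans a0 ab : 0 < b).
move: h => /(_ h1 h2) h.
have {h} := h _ (const_mx 1).
rewrite mx11 !mxE /= !mulr1n mul1r conjC1 mulr1 -rmorphB /= c0 subr_ge0; apply.
move=> v; rewrite mx11 !mxE /= !mulr1n -rmorphB /= mulrC mulrA.
apply: mulr_ge0; last by rewrite c0 subr_ge0.
by rewrite mulrC mul_conjC_ge0.
Qed.

Lemma diag_pos (R : realType) n (lam : 'rV[R]_n) : (forall i, 0 < lam 0 i) ->
  forall v : 'rV[R[i]]_n, v != 0 ->
  0 < (v *m diag_mx (map_mx (fun x : R => x%:C%C) lam) *m adj v) 0 0.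
Proof.
move=> hl v hv.
have [j0 hj] : exists j, v 0 j != 0.
  case/boolP: [exists j, v 0 j != 0] => [/existsP//|/existsPn h].
  move: hv; have -> : v = 0; last by rewrite eqxx.
  by apply/matrixP => i j; rewrite ord1 mxE; apply/eqP; rewrite -[_ == 0]negbK h.
rewrite mul_mx_diag mxE (bigD1 j0) //=.
apply: ltr_wpDr.
  apply: sumr_ge0 => j _; rewrite !mxE mulrAC; apply: mulr_ge0.
    by rewrite mul_conjC_ge0.
  by rewrite c0 ltW.
by rewrite !mxE mulrAC; apply: mulr_gt0; [rewrite mul_conjC_gt0 | rewrite c0'].
Qed.

Lemma f0_SLD (R : realType) : f0 (@f_SLD R) = 2^-1.
Proof.
rewrite /f0 /f_SLD.
suff -> : lim ((1 + x) / 2 @[x --> (0:R)^'+])%classic = (1 + 0) / 2 by rewrite addr0 mul1r.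
apply: cvg_lim => //.
apply: cvg_at_right_filter.
apply: cvgM; [apply: cvgD; [exact: cvg_cst| exact: cvg_id]| exact: cvg_cst].
Qed.

Lemma I_III (R : realType) (f : R -> R) (k : R) :
  Fop f ->
  (forall (n : nat) (rho A U : 'M[R[i]]_n) (lam : 'rV[R]_n),
              faithful_density rho -> selfadj A ->
              U \is unitarymx -> rho = herm_of U lam ->
              info (@f_SLD R) U lam A <= k * info f U lam A) ->
  forall t, 0 < t -> t != 1 -> f t <= k * f0 f * (1 + t).
Proof.
move=> [_ fpos f1 fsym] hI t t0 t1.
set p := (1 + t)^-1.
have p0 : 0 < p by rewrite invr_gt0; lra.
set lam : 'rV[R]_2 := \row_(i < 2) (if i == ord0 then p else t * p).
have lpos : forall i, 0 < lam 0 i.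
  by move=> i; rewrite mxE; case: ifP => _ //; apply: mulr_gt0.
set A : 'M[R[i]]_2 := \matrix_(i, j) (if i == j then 0 else 1).
have hD : herm_of 1%:M lam = diag_mx (map_mx (fun x : R => x%:C%C) lam).
  by rewrite /herm_of mul1mx adj1 mulmx1.
have := hI 2%N (herm_of 1%:M lam) A 1%:M lam _ _ (unitary1 _ _) erefl.
move=> h.
have hfd : faithful_density (herm_of 1%:M lam).
  rewrite hD; split.
  - apply/matrixP => i j; rewrite /adj !mxE.
    case: (eqVneq i j) => [->|ne].
      have := lpos j; rewrite mxE => lj.
      by rewrite /= mulr1n geC0_conj // c0 ltW.
    by rewrite !mulr0n conjC0.
  - exact: diag_pos.
  - rewrite mxtrace_diag big_ord_recr big_ord1 /= !mxE /=.
    rewrite -rmorphD /=; congr (_%:C%C); rewrite /p; field; lra.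
have hA : selfadj A.
  apply/matrixP => i j; rewrite /adj !mxE eq_sym.
  by case: (j == i); rewrite ?conjC0 ?conjC1.
move: {h} (h hfd hA).
rewrite !info_sum ?unitary1 // adj1 mul1mx mulmx1 f0_SLD.
rewrite !big_ord_recr !big_ord0 /= !add0r !mxE /=.
rewrite !subrr expr0n /= !mul0r !add0r !addr0 /mean_of /f_SLD.
have e1 : t * p / p = t by rewrite mulfK // gt_eqF.
have e2 : p / (t * p) = t^-1 by rewrite invfM mulrCA mulfV ?gt_eqF // mulr1.
have e3 : f t^-1 = f t / t.
  by rewrite -(fsym t t0) mulrC mulrA mulVf ?gt_eqF // mul1r.
rewrite e1 e2 e3 ?subr0 ?oppr0 ?mulr0 ?subr0 ?mulr1.
have F0 := fpos t t0.
set F := f t; set c := f0 f.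
rewrite -subr_ge0.
have -> : k * (c / 2 * ((t * p - p) ^+ 2 / (t * p * (F / t)) + (p - t * p) ^+ 2 / (p * F))) - 2^-1 / 2 * ((t * p - p) ^+ 2 / (t * p * ((1 + t^-1) / 2)) + (p - t * p) ^+ 2 / (p * ((1 + t) / 2))) = p * (t - 1) ^+ 2 * (k * c * (1 + t) - F) / (F * (1 + t)).
  have t10 : 0 < 1 + t by lra.
  by rewrite /p; field; rewrite !gt_eqF.
have t10 : 0 < 1 + t by lra.
have st : 0 < (t - 1) ^+ 2 by rewrite exprn_even_gt0 //= subr_eq0.
rewrite mulrAC pmulr_rge0 ?subr_ge0 //.
by apply: divr_gt0; apply: mulr_gt0.
Qed.

Lemma Re_ge0 (R : realType) (b : R[i]) : 0 <= complex.Re (b^* * b).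
Proof.
have := mul_conjC_ge0 b; rewrite mulrC lecE => /andP [_].
by [].
Qed.

Lemma term_ineq (R : realType) (x y c k N d F : R) :
  0 < x -> 0 < y -> 0 <= N -> 0 < F -> F <= k * c * (1 + y / x) ->
  2^-1 / 2 * (d ^+ 2 * N / (x * ((1 + y / x) / 2))) <= k * (c / 2) * (d ^+ 2 * N / (x * F)).
Proof.
move=> x0 y0 N0 F0 hF.
rewrite -subr_ge0.
have xy : 0 < x + y by lra.
have -> : k * (c / 2) * (d ^+ 2 * N / (x * F)) - 2^-1 / 2 * (d ^+ 2 * N / (x * ((1 + y / x) / 2)))
  = d ^+ 2 * N * x * (k * c * (1 + y / x) - F) / (2 * x * F * (x + y)).
  by field; rewrite !gt_eqF.
apply: divr_ge0.
  apply: mulr_ge0; last by rewrite subr_ge0.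
  by apply: mulr_ge0; [apply: mulr_ge0; [apply: sqr_ge0|] | apply: ltW].
by apply: ltW; apply: mulr_gt0; [apply: mulr_gt0; [apply: mulr_gt0|]|].
Qed.

Lemma III_I (R : realType) (f : R -> R) (k : R) :
  Fop f -> (forall x, 0 < x -> f x <= k * f0 f * (1 + x)) ->
  (forall (n : nat) (rho A U : 'M[R[i]]_n) (lam : 'rV[R]_n),
              faithful_density rho -> selfadj A ->
              U \is unitarymx -> rho = herm_of U lam ->
              info (@f_SLD R) U lam A <= k * info f U lam A).
Proof.
move=> [_ fpos _ _] h3 n rho A U lam hfd _ uU hrho.
have lp := @lam_pos _ _ _ _ _ hfd uU hrho.
rewrite !info_sum // f0_SLD mulrA !mulr_sumr; apply: ler_sum => i _.
rewrite !mulr_sumr; apply: ler_sum => j _.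
rewrite /mean_of /f_SLD; apply: term_ineq => //.
- exact: Re_ge0.
- by apply: fpos; apply: divr_gt0.
- by apply: h3; apply: divr_gt0.
Qed.

Lemma II_key (R : realType) (f : R -> R) (k x y : R) :
  0 < k -> 0 < x -> 0 < y -> 0 < f (y / x) ->
  (1 - k^-1) * ((x + y) / 2) + k^-1 * (2 * x * y / (x + y)) - mean_of (ftilde f) x y
  = (x - y) ^+ 2 * x * (k * f0 f * (1 + y / x) - f (y / x)) / (2 * x * f (y / x) * k * (x + y)).
Proof.
move=> k0 x0 y0 F0.
rewrite /mean_of /ftilde.
set F := f (y / x); set c := f0 f.
have xy : 0 < x + y by lra.
by field; rewrite !gt_eqF.
Qed.

Lemma II_III (R : realType) (f : R -> R) (k : R) :
  Fop f -> 1 <= k ->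
  (forall x y : R, 0 < x -> 0 < y ->
               mean_of (ftilde f) x y
               <= (1 - k^-1) * ((x + y) / 2) + k^-1 * (2 * x * y / (x + y))) ->
  forall t, 0 < t -> t != 1 -> f t <= k * f0 f * (1 + t).
Proof.
move=> [_ fpos _ _] k1 h t t0 t1.
have k0 : 0 < k by lra.
have := h 1 t ltr01 t0.
rewrite -subr_ge0 II_key //; try by rewrite ?divr1; apply: fpos.
rewrite !divr1.
have st : 0 < (1 - t) ^+ 2 by rewrite exprn_even_gt0 //= subr_eq0 eq_sym.
have F0 := fpos t t0.
have t10 : 0 < 1 + t by lra.
rewrite mulr1 mulrAC pmulr_rge0 ?subr_ge0 //.
apply: divr_gt0 => //; apply: mulr_gt0 => //; apply: mulr_gt0 => //; apply: mulr_gt0 => //.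
by rewrite mulr1.
Qed.

Lemma III_II (R : realType) (f : R -> R) (k : R) :
  Fop f -> 1 <= k ->
  (forall x, 0 < x -> f x <= k * f0 f * (1 + x)) ->
  (forall x y : R, 0 < x -> 0 < y ->
               mean_of (ftilde f) x y
               <= (1 - k^-1) * ((x + y) / 2) + k^-1 * (2 * x * y / (x + y))).
Proof.
move=> [_ fpos _ _] k1 h x y x0 y0.
have k0 : 0 < k by lra.
have yx : 0 < y / x by apply: divr_gt0.
rewrite -subr_ge0 II_key //; last exact: fpos.
have F0 := fpos _ yx.
have xy : 0 < x + y by lra.
apply: divr_ge0.
  apply: mulr_ge0; last by rewrite subr_ge0; apply: h.
  by apply: mulr_ge0; [apply: sqr_ge0 | apply: ltW].
by apply: ltW; apply: mulr_gt0 => //; apply: mulr_gt0 => //; apply: mulr_gt0 => //; apply: mulr_gt0.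
Qed.

Lemma III_ext (R : realType) (f : R -> R) (k : R) :
  Fop f ->
  (forall t, 0 < t -> t != 1 -> f t <= k * f0 f * (1 + t)) ->
  forall t, 0 < t -> f t <= k * f0 f * (1 + t).
Proof.
move=> [hm fpos f1 _] h t t0.
case: (eqVneq t 1) => [->|]; last exact: h.
rewrite f1; set a := k * f0 f.
rewrite leNgt; apply/negP => ha.
have two0 : (0:R) < 2 by lra.
have two1 : (1:R) < 2 by lra.
have h2 := h 2 two0 (negbT (gt_eqF two1)).
have F2 := fpos 2 two0.
move: h2; rewrite -/a => h2.
have a0 : 0 < a.
  rewrite ltNge; apply/negP => a0; lra.
set s := 1 + (1 - 2 * a) / (2 * a).
have s1 : 1 < s.
  rewrite /s ltrDl; apply: divr_gt0; lra.
have := @fmono _ _ hm 1 s ltr01 (ltW s1).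
have := h s (lt_trans ltr01 s1) (negbT (gt_eqF s1)).
have -> : a * (1 + s) = (1 + 2 * a) / 2 by rewrite /s; field; rewrite gt_eqF.
rewrite f1 => hs h1.
have := le_trans h1 hs.
lra.
Qed.

Theorem mainTheorem6 (R : realType) (f : R -> R) (k : R) :
  Fop_r f -> 1 <= k ->
  let I := (forall (n : nat) (rho A U : 'M[R[i]]_n) (lam : 'rV[R]_n),
              faithful_density rho -> selfadj A ->
              U \is unitarymx -> rho = herm_of U lam ->
              info (@f_SLD R) U lam A <= k * info f U lam A) in
  let II := (forall x y : R, 0 < x -> 0 < y ->
               mean_of (ftilde f) x y
               <= (1 - k^-1) * ((x + y) / 2) + k^-1 * (2 * x * y / (x + y))) in
  let III := (forall x : R, 0 < x -> f x <= 2 * k * f0 f * ((1 + x) / 2)) in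
  (I <-> II) /\ (II <-> III).
Proof.
intros [hF _] k1 I II III; subst I II III.
have conv : forall x : R, 2 * k * f0 f * ((1 + x) / 2) = k * f0 f * (1 + x).
  by move=> x; field.
have e3 : (forall x : R, 0 < x -> f x <= 2 * k * f0 f * ((1 + x) / 2)) <->
          (forall x : R, 0 < x -> f x <= k * f0 f * (1 + x)).
  by split => h x x0; [rewrite -conv | rewrite conv]; apply: h.
rewrite e3.
have I3 := I_III _ _ k hF.
have II3 := II_III _ _ _ hF k1.
have E := III_ext _ _ k hF.
have P2 := III_II _ _ _ hF k1.
have P1 := III_I _ _ k hF.
split; split => h.
- exact: (P2 (E (I3 h))).
- exact: (P1 (E (II3 h))).
- exact: (E (II3 h)).
- exact: (P2 h).
Qed.
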